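(* Let $\Gamma_0$ be a connected $G$-graph (resp. a connected abelian $G$-graph), and let $\Gamma$ be a multigraph all of whose connected components are isomorphic to $\Gamma_0$. Then $\Gamma$ is a $G$-graph (resp. an abelian $G$-graph).
   Context: Work in ZFC (axiom of choice assumed). For a group $G$ and a multiset $S$ of elements of $G$, $\Phi(G,S)$ is the multigraph (parallel edges allowed) whose vertex set is the union over the members $s$ of $S$ (with multiplicity, a repeated element giving a separate copy of its cosets per occurrence) of $V_s=\{\langle s\rangle x: x\in G\}$ (right cosets), with, for $\langle s\rangle x\in V_s$, $\langle t\rangle y\in V_t$, $s,t$ distinct members of $S$, one edge labeled $g$ between them for each $g\in\langle s\rangle x\cap\langle t\rangle y$, and no other edges. A $G$-graph is a multigraph isomorphic (ignoring labels) to some $\Phi(G,S)$; an abelian $G$-graph is one isomorphic to some $\Phi(G,S)$ with $G$ abelian. *)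

(* Defs.v *)
From Stdlib Require Import ZArith Relations.

Record group := Group {
  gcar :> Type;
  gmul : gcar -> gcar -> gcar;
  gone : gcar;
  ginv : gcar -> gcar;
  gmulA : forall x y z, gmul x (gmul y z) = gmul (gmul x y) z;
  gmul1g : forall x, gmul gone x = x;
  gmulg1 : forall x, gmul x gone = x;
  gmulVg : forall x, gmul (ginv x) x = gone;
  gmulgV : forall x, gmul x (ginv x) = gone
}.

Definition abelian (G : group) : Prop := forall x y : G, gmul G x y = gmul G y x.

Fixpoint gpow (G : group) (x : G) (n : nat) : G :=
  match n with O => gone G | S m => gmul G x (gpow G x m) end.

Definition zpow (G : group) (x : G) (z : Z) : G :=
  match z with
  | Z0 => gone G
  | Zpos p => gpow G x (Pos.to_nat p)
  | Zneg p => gpow G (ginv G x) (Pos.to_nat p)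
  end.

Definition rcoset (G : group) (s x : G) : G -> Prop :=
  fun g => exists z : Z, g = gmul G (zpow G s z) x.

Record multigraph := Multigraph {
  vert : Type;
  edge : Type;
  inc : edge -> vert -> Prop
}.

Definition is_multigraph (M : multigraph) : Prop :=
  forall e : edge M, exists u v : vert M,
    inc M e u /\ inc M e v /\ forall w, inc M e w -> w = u \/ w = v.

Definition bijective {A B : Type} (f : A -> B) : Prop :=
  (forall x y, f x = f y -> x = y) /\ (forall y, exists x, f x = y).

(** isomorphism ignoring labels *)
Definition iso (M N : multigraph) : Prop :=
  exists (f : vert M -> vert N) (g : edge M -> edge N),
    bijective f /\ bijective g /\
    forall e v, inc M e v <-> inc N (g e) (f v).

Definition adj (M : multigraph) (u v : vert M) : Prop :=
  exists e, inc M e u /\ inc M e v.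

Definition linked (M : multigraph) : vert M -> vert M -> Prop :=
  clos_refl_trans (vert M) (adj M).

Definition connected (M : multigraph) : Prop :=
  (exists v : vert M, True) /\ forall u v : vert M, linked M u v.

Definition component (M : multigraph) (v : vert M) : multigraph :=
  {| vert := { w : vert M | linked M v w };
     edge := { e : edge M | exists w, linked M v w /\ inc M e w };
     inc := fun e w => inc M (proj1_sig e) (proj1_sig w) |}.

(** * The multigraph Phi(G, S), S a multiset given as an indexed family
      s : I -> G (distinct indices = distinct members of S). *)
Definition Phi (G : group) (I : Type) (s : I -> G) : multigraph :=
  {| vert := { p : I * (G -> Prop) | exists x : G, snd p = rcoset G (s (fst p)) x };
     (* an edge: an unordered pair {i,j} of distinct members and a label g *)
     edge := { p : (I -> Prop) * G |
               exists i j : I, i <> j /\ fst p = (fun k => k = i \/ k = j) };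
     (* the edge ({i,j}, g) joins the coset of <s_i> and of <s_j> containing g *)
     inc := fun e v =>
              fst (proj1_sig e) (fst (proj1_sig v)) /\
              snd (proj1_sig v) (snd (proj1_sig e)) |}.

Definition is_Ggraph (M : multigraph) : Prop :=
  exists (G : group) (I : Type) (s : I -> G), iso (Phi G I s) M.

Definition is_abelian_Ggraph (M : multigraph) : Prop :=
  exists (G : group) (I : Type) (s : I -> G), abelian G /\ iso (Phi G I s) M.

(* Main.v *)
Require Import Defs.
From mathcomp Require ssreflect ssrfun ssrbool eqtype boolp wochoice.
Module ZM.
Import ssreflect ssrfun ssrbool eqtype boolp wochoice.

Lemma zorn_prop (T : Type) (R : T -> T -> Prop) (S : T -> Prop) :
  (forall x, S x -> R x x) ->
  (forall x y z, S x -> S y -> S z -> R x y -> R y z -> R x z) ->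
  (forall C : T -> Prop, (forall x, C x -> S x) ->
     (forall x y, C x -> C y -> R x y \/ R y x) ->
     exists z, S z /\ forall x, C x -> R x z) ->
  exists z, S z /\ forall x, S x -> R z x -> R x z.
Proof.
move=> Rr Rt Ub.
pose T' := {classic T}.
pose R' : rel T' := fun x y => `[< R x y >].
pose S' : {pred T'} := fun x => `[< S x >].
have := @Zorn's_lemma T' R' S'.
case.
- by move=> x /asboolP Sx; apply/asboolP; apply: Rr.
- move=> y x z /asboolP Sy /asboolP Sx /asboolP Sz /asboolP Rxy /asboolP Ryz.
  by apply/asboolP; apply: (Rt x y z).
- move=> C CS /wo_chainW Cch.
  have Ch : forall x y, x \in C -> y \in C -> R x y \/ R y x.
    move=> x y Cx Cy; have := Cch x y Cx Cy.
    by case/orP=> /asboolP H; [left|right].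
  have [z [Sz Hz]] := Ub (fun x => x \in C)
     (fun x Cx => elimT (asboolP _) (CS x Cx)) Ch.
  exists z; first by apply/asboolP.
  by move=> x Cx; apply/asboolP; apply: Hz.
- move=> z /asboolP Sz Hmax; exists z; split=> // x Sx Rzx.
  by have /asboolP := Hmax x (introT (asboolP _) Sx) (introT (asboolP _) Rzx).
Qed.
End ZM.
Set Bullet Behavior "Strict Subproofs".
Definition zorn_prop := ZM.zorn_prop.
From Stdlib Require Import ClassicalEpsilon FunctionalExtensionality PropExtensionality ProofIrrelevance Classical Lia.

Definition inj {A B : Type} (f : A -> B) := forall x y, f x = f y -> x = y.
Definition bij {A B : Type} (f : A -> B) : Prop :=
  (forall x y, f x = f y -> x = y) /\ (forall y, exists x, f x = y).

Definition xmi (P : Prop) : {P} + {~P} := excluded_middle_informative P.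

Lemma CB (A B : Type) (f : A -> B) (g : B -> A) : inj f -> inj g ->
  exists h : A -> B, bij h.
Proof.
  intros Hf Hg.
  set (C := fun a => exists n a0, (~ exists b, g b = a0) /\ a = Nat.iter n (fun x => g (f x)) a0).
  assert (HnC : forall a, ~ C a -> exists b, g b = a).
  { intros a Ha. apply NNPP. intro H. apply Ha. exists 0, a. split; auto. }
  set (h := fun a => match xmi (C a) with
                     | left _ => f a
                     | right H => proj1_sig (constructive_indefinite_description _ (HnC a H)) end).
  exists h. split.
  - intros x y. unfold h.
    destruct (xmi (C x)) as [Cx|Cx]; destruct (xmi (C y)) as [Cy|Cy].
    + apply Hf.
    + destruct (constructive_indefinite_description _ (HnC y Cy)) as [b Hb]; simpl.
      intros E. exfalso. apply Cy. destruct Cx as [n [a0 [H1 H2]]].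
      exists (S n), a0. split; auto. simpl. rewrite <- H2, E; auto.
    + destruct (constructive_indefinite_description _ (HnC x Cx)) as [b Hb]; simpl.
      intros E. exfalso. apply Cx. destruct Cy as [n [a0 [H1 H2]]].
      exists (S n), a0. split; auto. simpl. rewrite <- H2, <- E; auto.
    + destruct (constructive_indefinite_description _ (HnC x Cx)) as [b Hb]; simpl.
      destruct (constructive_indefinite_description _ (HnC y Cy)) as [b' Hb']; simpl.
      intros E; subst; auto.
  - intros b. destruct (classic (C (g b))) as [Cg|Cg].
    + destruct Cg as [n [a0 [H1 H2]]]. destruct n as [|n].
      * exfalso. apply H1. exists b. exact H2.
      * simpl in H2. apply Hg in H2. exists (Nat.iter n (fun x => g (f x)) a0).
        unfold h. destruct (xmi _) as [Cx|Cx].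
        -- auto.
        -- exfalso. apply Cx. exists n, a0. auto.
    + exists (g b). unfold h. destruct (xmi (C (g b))) as [Cx|Cx].
      * contradiction.
      * destruct (constructive_indefinite_description _ (HnC (g b) Cx)) as [b' Hb']; simpl.
        apply Hg; auto.
Qed.
From Stdlib Require Import ClassicalEpsilon FunctionalExtensionality PropExtensionality ProofIrrelevance Classical Lia.

Lemma inj_total (U V : Type) : (exists f : U -> V, inj f) \/ (exists g : V -> U, inj g).
Proof.
  set (S := fun P : U -> V -> Prop =>
         (forall u v v', P u v -> P u v' -> v = v') /\ (forall u u' v, P u v -> P u' v -> u = u')).
  set (R := fun P Q : U -> V -> Prop => forall u v, P u v -> Q u v).
  destruct (zorn_prop (U -> V -> Prop) R S) as [M [SM HM]].
  - intros x _ u v; auto.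
  - intros x y z _ _ _ H1 H2 u v H; auto.
  - intros C CS Cch. exists (fun u v => exists P, C P /\ P u v). split.
    + split.
      * intros u v v' [P1 [C1 H1]] [P2 [C2 H2]].
        destruct (Cch P1 P2 C1 C2) as [L|L].
        -- apply (proj1 (CS P2 C2) u); auto.
        -- apply (proj1 (CS P1 C1) u); auto.
      * intros u u' v [P1 [C1 H1]] [P2 [C2 H2]].
        destruct (Cch P1 P2 C1 C2) as [L|L].
        -- apply (proj2 (CS P2 C2) u u' v); auto.
        -- apply (proj2 (CS P1 C1) u u' v); auto.
    + intros P CP u v H. exists P; auto.
  - destruct (classic (forall u, exists v, M u v)) as [Hd|Hd].
    + left. exists (fun u => proj1_sig (constructive_indefinite_description _ (Hd u))).
      intros x y. destruct (constructive_indefinite_description _ (Hd x)) as [a Ha].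
      destruct (constructive_indefinite_description _ (Hd y)) as [b Hb]. simpl.
      intros E; subst. apply (proj2 SM x y b); auto.
    + destruct (classic (forall v, exists u, M u v)) as [Hr|Hr].
      * right. exists (fun v => proj1_sig (constructive_indefinite_description _ (Hr v))).
        intros x y. destruct (constructive_indefinite_description _ (Hr x)) as [a Ha].
        destruct (constructive_indefinite_description _ (Hr y)) as [b Hb]. simpl.
        intros E; subst. apply (proj1 SM b x y); auto.
      * exfalso. apply not_all_ex_not in Hd. apply not_all_ex_not in Hr.
        destruct Hd as [u0 Hu0]. destruct Hr as [v0 Hv0].
        set (M' := fun u v => M u v \/ (u = u0 /\ v = v0)).
        assert (SM' : S M').
        { split.
          - intros u v v' [H1|[-> ->]] [H2|[E ->]]; auto.
            + apply (proj1 SM u); auto.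
            + subst. exfalso; apply Hu0; eauto.
            + exfalso; apply Hu0; eauto.
          - intros u u' v [H1|[-> ->]] [H2|[-> E]]; auto.
            + apply (proj2 SM u u' v); auto.
            + subst. exfalso; apply Hv0; eauto.
            + exfalso; apply Hv0; eauto. }
        assert (RM : R M M') by (intros u v H; left; auto).
        apply Hv0. exists u0. apply (HM M' SM' RM). right; auto.
Qed.
From Stdlib Require Import ClassicalEpsilon FunctionalExtensionality PropExtensionality ProofIrrelevance Classical Lia PeanoNat.
Set Bullet Behavior "Strict Subproofs".

Lemma sig_eq (A : Type) (P : A -> Prop) (a b : sig P) : proj1_sig a = proj1_sig b -> a = b.
Proof. destruct a, b; simpl; intros ->; f_equal; apply proof_irrelevance. Qed.

Section Inf.
Variable X : Type.

Record St := mkSt { D : X -> Prop; m : X -> X -> X; o : X; iv : X -> X; db : bool -> X -> X }.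

Record Valid (S : St) : Prop := {
  v_o : D S (o S);
  v_m : forall x y, D S x -> D S y -> D S (m S x y);
  v_iv : forall x, D S x -> D S (iv S x);
  v_A : forall x y z, D S x -> D S y -> D S z -> m S x (m S y z) = m S (m S x y) z;
  v_1 : forall x, D S x -> m S (o S) x = x;
  v_V : forall x, D S x -> m S (iv S x) x = o S;
  v_C : forall x y, D S x -> D S y -> m S x y = m S y x;
  v_db : forall b x, D S x -> D S (db S b x);
  v_dbi : forall b b' x x', D S x -> D S x' -> db S b x = db S b' x' -> b = b' /\ x = x';
  v_dbs : forall y, D S y -> exists b x, D S x /\ db S b x = y }.

Record Le (S T : St) : Prop := {
  l_D : forall x, D S x -> D T x;
  l_m : forall x y, D S x -> D S y -> m S x y = m T x y;
  l_o : o S = o T;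
  l_iv : forall x, D S x -> iv S x = iv T x;
  l_db : forall b x, D S x -> db S b x = db T b x }.

Arguments l_D {S T}. Arguments l_m {S T}. Arguments l_o {S T}. Arguments l_iv {S T}. Arguments l_db {S T}.
Arguments v_o {S}. Arguments v_m {S}. Arguments v_iv {S}. Arguments v_A {S}. Arguments v_1 {S}.
Arguments v_V {S}. Arguments v_C {S}. Arguments v_db {S}. Arguments v_dbi {S}. Arguments v_dbs {S}.

Lemma Le_refl S : Le S S.
Proof. constructor; auto. Qed.

Lemma Le_trans S T U : Le S T -> Le T U -> Le S U.
Proof.
  intros [a b c d e] [a' b' c' d' e']; constructor; intros; auto.
  - rewrite b; auto.
  - congruence.
  - rewrite d; auto.
  - rewrite e; auto.
Qed.

Section Base0.
Variable iota : nat -> X.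
Hypothesis Hiota : inj iota.
Definition ii (x : X) : nat := epsilon (inhabits 0) (fun n => x = iota n).
Lemma ii_spec n : ii (iota n) = n.
Proof.
  unfold ii. apply Hiota. symmetry. apply (epsilon_spec (inhabits 0) (fun k => iota n = iota k)).
  exists n; auto.
Qed.
Definition base : St := {| D := fun x => exists n, x = iota n;
  m := fun x y => iota (Nat.lxor (ii x) (ii y)); o := iota 0; iv := fun x => x;
  db := fun b x => iota (2 * ii x + Nat.b2n b) |}.
Lemma base_valid : Valid base.
Proof.
  constructor; simpl.
  - exists 0; auto.
  - intros; eauto.
  - auto.
  - intros x y z [a ->] [b ->] [c ->]. rewrite !ii_spec. f_equal. rewrite Nat.lxor_assoc; auto.
  - intros x [a ->]. rewrite !ii_spec, Nat.lxor_0_l; auto.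
  - intros x [a ->]. rewrite !ii_spec, Nat.lxor_nilpotent; auto.
  - intros x y [a ->] [b ->]. rewrite !ii_spec, Nat.lxor_comm; auto.
  - intros; eauto.
  - intros b b' x x' [a ->] [c ->] E. apply Hiota in E. rewrite !ii_spec in E.
    destruct b, b'; simpl in E; split; try f_equal; try lia.
  - intros y [n ->]. exists (Nat.odd n), (iota (Nat.div2 n)). split; eauto.
    rewrite ii_spec. f_equal. symmetry. apply Nat.div2_odd.
Qed.
End Base0.

Section Chain.
Variable C : St -> Prop.
Hypothesis CV : forall S, C S -> Valid S.
Hypothesis Cch : forall S T, C S -> C T -> Le S T \/ Le T S.
Variable S0 : St.
Hypothesis CS0 : C S0.

Definition pick (P : St -> Prop) := epsilon (inhabits S0) P.
Definition UD x := exists S, C S /\ D S x.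
Definition U : St := {|
  D := UD;
  m := fun x y => m (pick (fun S => C S /\ D S x /\ D S y)) x y;
  o := o S0;
  iv := fun x => iv (pick (fun S => C S /\ D S x)) x;
  db := fun b x => db (pick (fun S => C S /\ D S x)) b x |}.

Lemma key_m S x y : C S -> D S x -> D S y -> m U x y = m S x y.
Proof.
  intros CS Dx Dy. simpl.
  destruct (epsilon_spec (inhabits S0) (fun S => C S /\ D S x /\ D S y)) as [CT [Tx Ty]].
  { exists S; auto. }
  fold (pick (fun S => C S /\ D S x /\ D S y)) in *.
  destruct (Cch S _ CS CT) as [Lx|Lx].
  - symmetry; apply (l_m Lx); auto.
  - apply (l_m Lx); auto.
Qed.

Lemma key_iv S x : C S -> D S x -> iv U x = iv S x.
Proof.
  intros CS Dx. simpl.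
  destruct (epsilon_spec (inhabits S0) (fun S => C S /\ D S x)) as [CT Tx].
  { exists S; auto. }
  fold (pick (fun S => C S /\ D S x)) in *.
  destruct (Cch S _ CS CT) as [Lx|Lx].
  - symmetry; apply (l_iv Lx); auto.
  - apply (l_iv Lx); auto.
Qed.

Lemma key_db S b x : C S -> D S x -> db U b x = db S b x.
Proof.
  intros CS Dx. simpl.
  destruct (epsilon_spec (inhabits S0) (fun S => C S /\ D S x)) as [CT Tx].
  { exists S; auto. }
  fold (pick (fun S => C S /\ D S x)) in *.
  destruct (Cch S _ CS CT) as [Lx|Lx].
  - symmetry; apply (l_db Lx); auto.
  - apply (l_db Lx); auto.
Qed.

Lemma key_o S : C S -> o S = o U.
Proof.
  intros CS. simpl. destruct (Cch S S0 CS CS0) as [Lx|Lx].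
  - apply (l_o Lx).
  - symmetry; apply (l_o Lx).
Qed.

Lemma common3 x y z : UD x -> UD y -> UD z -> exists S, C S /\ D S x /\ D S y /\ D S z.
Proof.
  intros [S1 [C1 H1]] [S2 [C2 H2]] [S3 [C3 H3]].
  destruct (Cch S1 S2 C1 C2) as [Lab|Lab].
  - destruct (Cch S2 S3 C2 C3) as [Lx|Lx].
    + exists S3. repeat split; auto; first [assumption | apply (l_D Lab); assumption | apply (l_D Lx); assumption | apply (l_D Lab), (l_D Lx); assumption | apply (l_D Lx), (l_D Lab); assumption].
    + exists S2. repeat split; auto; first [assumption | apply (l_D Lab); assumption | apply (l_D Lx); assumption | apply (l_D Lab), (l_D Lx); assumption | apply (l_D Lx), (l_D Lab); assumption].
  - destruct (Cch S1 S3 C1 C3) as [Lx|Lx].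
    + exists S3. repeat split; auto; first [assumption | apply (l_D Lab); assumption | apply (l_D Lx); assumption | apply (l_D Lab), (l_D Lx); assumption | apply (l_D Lx), (l_D Lab); assumption].
    + exists S1. repeat split; auto; first [assumption | apply (l_D Lab); assumption | apply (l_D Lx); assumption | apply (l_D Lab), (l_D Lx); assumption | apply (l_D Lx), (l_D Lab); assumption].
Qed.

Lemma U_valid : Valid U.
Proof.
  constructor.
  - exists S0. split; auto. apply (v_o (CV _ CS0)).
  - intros x y Hx Hy. destruct (common3 x y y Hx Hy Hy) as [S [CS [Sx [Sy _]]]].
    rewrite (key_m S); auto. exists S; split; auto. apply (v_m (CV _ CS)); auto.
  - intros x Hx. destruct (common3 x x x Hx Hx Hx) as [S [CS [Sx _]]].
    rewrite (key_iv S); auto. exists S; split; auto. apply (v_iv (CV _ CS)); auto.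
  - intros x y z Hx Hy Hz. destruct (common3 x y z Hx Hy Hz) as [S [CS [Sx [Sy Sz]]]].
    pose proof (CV _ CS) as V.
    rewrite (key_m S y z), (key_m S x y), (key_m S x), (key_m S _ z); auto;
      try apply (v_m V); auto. apply (v_A V); auto.
  - intros x Hx. destruct (common3 x x x Hx Hx Hx) as [S [CS [Sx _]]].
    pose proof (CV _ CS) as V. rewrite <- (key_o S CS), (key_m S); auto.
    + apply (v_1 V); auto.
    + apply (v_o V).
  - intros x Hx. destruct (common3 x x x Hx Hx Hx) as [S [CS [Sx _]]].
    pose proof (CV _ CS) as V. rewrite <- (key_o S CS), (key_iv S), (key_m S); auto.
    + apply (v_V V); auto.
    + apply (v_iv V); auto.
  - intros x y Hx Hy. destruct (common3 x y y Hx Hy Hy) as [S [CS [Sx [Sy _]]]].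
    pose proof (CV _ CS) as V. rewrite (key_m S), (key_m S y x); auto. apply (v_C V); auto.
  - intros b x Hx. destruct (common3 x x x Hx Hx Hx) as [S [CS [Sx _]]].
    rewrite (key_db S); auto. exists S; split; auto. apply (v_db (CV _ CS)); auto.
  - intros b b' x x' Hx Hx' E. destruct (common3 x x' x' Hx Hx' Hx') as [S [CS [Sx [Sx' _]]]].
    rewrite (key_db S), (key_db S _ x') in E; auto. apply (v_dbi (CV _ CS)) in E; auto.
  - intros y [S [CS Sy]]. destruct (v_dbs (CV _ CS) y Sy) as [b [x [Sx E]]].
    exists b, x. split. { exists S; auto. } rewrite (key_db S); auto.
Qed.

Lemma U_ub S : C S -> Le S U.
Proof.
  intros CS. constructor.
  - intros x Hx; exists S; auto.
  - intros; symmetry; apply key_m; auto.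
  - apply key_o; auto.
  - intros; symmetry; apply key_iv; auto.
  - intros; symmetry; apply key_db; auto.
Qed.
End Chain.

Section Ext.
Variable M : St.
Hypothesis VM : Valid M.
Variable hx : X -> X.
Hypothesis hx_out : forall x, D M x -> ~ D M (hx x).
Hypothesis hx_inj : forall x y, D M x -> D M y -> hx x = hx y -> x = y.

Definition hinv x := epsilon (inhabits (o M)) (fun y => D M y /\ x = hx y).
Lemma hinv_spec y : D M y -> hinv (hx y) = y.
Proof.
  intros Dy. unfold hinv.
  destruct (epsilon_spec (inhabits (o M)) (fun y' => D M y' /\ hx y = hx y')) as [D' E].
  { exists y; auto. }
  symmetry; apply hx_inj; auto.
Qed.
Definition enc (y : X) (c : bool) := if c then hx y else y.
Definition dy x := if xmi (D M x) then x else hinv x.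
Definition dc x := if xmi (D M x) then false else true.
Lemma dy_enc y c : D M y -> dy (enc y c) = y.
Proof.
  intros Dy; unfold dy, enc; destruct c; destruct (xmi _) as [H|H]; auto.
  - exfalso; apply (hx_out y); auto.
  - apply hinv_spec; auto.
  - contradiction.
Qed.
Lemma dc_enc y c : D M y -> dc (enc y c) = c.
Proof.
  intros Dy; unfold dc, enc; destruct c; destruct (xmi _) as [H|H]; auto.
  - exfalso; apply (hx_out y); auto.
  - contradiction.
Qed.
Lemma enc_inj a a' c c' : D M a -> D M a' -> enc a c = enc a' c' -> a = a' /\ c = c'.
Proof.
  intros Da Da' E. split.
  - rewrite <- (dy_enc a c), <- (dy_enc a' c'), E; auto.
  - rewrite <- (dc_enc a c), <- (dc_enc a' c'), E; auto.
Qed.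

Definition D' x := D M x \/ exists y, D M y /\ x = hx y.
Lemma D'_inv x : D' x -> exists a c, D M a /\ x = enc a c.
Proof.
  intros [H|[y [Dy ->]]].
  - exists x, false; auto.
  - exists y, true; auto.
Qed.
Lemma enc_D' a c : D M a -> D' (enc a c).
Proof. intros; destruct c; simpl; [right; eauto | left; auto]. Qed.

Definition M' : St := {| D := D';
  m := fun x y => enc (m M (dy x) (dy y)) (xorb (dc x) (dc y));
  o := o M;
  iv := fun x => enc (iv M (dy x)) (dc x);
  db := fun b x => if xmi (D M x) then db M b x else hx (db M b (hinv x)) |}.

Lemma m'_enc a c a' c' : D M a -> D M a' ->
  m M' (enc a c) (enc a' c') = enc (m M a a') (xorb c c').
Proof. intros; simpl; rewrite !dy_enc, !dc_enc; auto. Qed.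
Lemma iv'_enc a c : D M a -> iv M' (enc a c) = enc (iv M a) c.
Proof. intros; simpl; rewrite !dy_enc, !dc_enc; auto. Qed.
Lemma db'_enc b a c : D M a -> db M' b (enc a c) = enc (db M b a) c.
Proof.
  intros Da; simpl. destruct c; simpl; destruct (xmi _) as [H|H]; auto.
  - exfalso; apply (hx_out a); auto.
  - rewrite hinv_spec; auto.
  - contradiction.
Qed.

Lemma M'_valid : Valid M'.
Proof.
  constructor.
  - left; apply (v_o VM).
  - intros x y Hx Hy. destruct (D'_inv x Hx) as [a [c [Da ->]]].
    destruct (D'_inv y Hy) as [a' [c' [Da' ->]]]. rewrite m'_enc; auto.
    apply enc_D'; apply (v_m VM); auto.
  - intros x Hx. destruct (D'_inv x Hx) as [a [c [Da ->]]]. rewrite iv'_enc; auto.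
    apply enc_D'; apply (v_iv VM); auto.
  - intros x y z Hx Hy Hz. destruct (D'_inv x Hx) as [a [c [Da ->]]].
    destruct (D'_inv y Hy) as [a' [c' [Da' ->]]]. destruct (D'_inv z Hz) as [a'' [c'' [Da'' ->]]].
    rewrite !m'_enc; auto; try apply (v_m VM); auto.
    rewrite (v_A VM), Bool.xorb_assoc; auto.
  - intros x Hx. destruct (D'_inv x Hx) as [a [c [Da ->]]].
    change (o M') with (enc (o M) false). rewrite m'_enc; auto; [|apply (v_o VM)].
    rewrite (v_1 VM); auto.
  - intros x Hx. destruct (D'_inv x Hx) as [a [c [Da ->]]].
    rewrite iv'_enc, m'_enc; auto; [|apply (v_iv VM); auto].
    rewrite (v_V VM), Bool.xorb_nilpotent; auto.
  - intros x y Hx Hy. destruct (D'_inv x Hx) as [a [c [Da ->]]].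
    destruct (D'_inv y Hy) as [a' [c' [Da' ->]]]. rewrite !m'_enc; auto.
    rewrite (v_C VM), Bool.xorb_comm; auto.
  - intros b x Hx. destruct (D'_inv x Hx) as [a [c [Da ->]]]. rewrite db'_enc; auto.
    apply enc_D'; apply (v_db VM); auto.
  - intros b b' x x' Hx Hx' E. destruct (D'_inv x Hx) as [a [c [Da ->]]].
    destruct (D'_inv x' Hx') as [a' [c' [Da' ->]]]. rewrite !db'_enc in E; auto.
    apply enc_inj in E; try apply (v_db VM); auto. destruct E as [E1 E2].
    apply (v_dbi VM) in E1; auto. destruct E1; subst; auto.
  - intros y Hy. destruct (D'_inv y Hy) as [a [c [Da ->]]].
    destruct (v_dbs VM a Da) as [b [x [Dx E]]]. exists b, (enc x c). split.
    + apply enc_D'; auto.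
    + rewrite db'_enc, E; auto.
Qed.

Lemma M'_ge : Le M M'.
Proof.
  constructor.
  - intros x Hx; left; auto.
  - intros x y Hx Hy. change (m M' x y) with (m M' (enc x false) (enc y false)).
    rewrite m'_enc; auto.
  - auto.
  - intros x Hx. change (iv M' x) with (iv M' (enc x false)). rewrite iv'_enc; auto.
  - intros b x Hx. change (db M' b x) with (db M' b (enc x false)). rewrite db'_enc; auto.
Qed.

Lemma M'_new : D M' (hx (o M)) /\ ~ D M (hx (o M)).
Proof. split. - right; exists (o M); split; auto; apply (v_o VM). - apply hx_out, (v_o VM). Qed.
End Ext.

Definition Ugrp (S : St) (HS : Valid S) : group.
Proof.
  refine (Group {x | D S x}
    (fun a b => exist _ (m S (proj1_sig a) (proj1_sig b)) (v_m HS _ _ (proj2_sig a) (proj2_sig b)))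
    (exist _ (o S) (v_o HS))
    (fun a => exist _ (iv S (proj1_sig a)) (v_iv HS _ (proj2_sig a))) _ _ _ _ _).
  - intros [x Hx] [y Hy] [z Hz]; apply sig_eq; simpl; apply (v_A HS); auto.
  - intros [x Hx]; apply sig_eq; simpl; apply (v_1 HS); auto.
  - intros [x Hx]; apply sig_eq; simpl; rewrite (v_C HS); auto; [apply (v_1 HS); auto | apply (v_o HS)].
  - intros [x Hx]; apply sig_eq; simpl; apply (v_V HS); auto.
  - intros [x Hx]; apply sig_eq; simpl; rewrite (v_C HS); auto; [apply (v_V HS); auto | apply (v_iv HS); auto].
Defined.

Lemma Ugrp_abelian S HS : abelian (Ugrp S HS).
Proof. intros [x Hx] [y Hy]; apply sig_eq; simpl; apply (v_C HS); auto. Qed.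

Lemma group_inf (iota : nat -> X) : inj iota ->
  exists A : group, abelian A /\ exists f : A -> X, bij f.
Proof.
  intros Hi.
  destruct (zorn_prop St Le Valid) as [M [VM HM]].
  - intros; apply Le_refl.
  - intros x y z _ _ _; apply Le_trans.
  - intros C CV Cch. destruct (classic (exists S0, C S0)) as [[S0 CS0]|NC].
    + exists (U C S0). split; [apply U_valid | apply U_ub]; auto.
    + exists (base iota). split; [apply base_valid; auto|]. intros S CS; exfalso; eauto.
  - assert (NoExt : ~ exists hx : X -> X, (forall x, D M x -> ~ D M (hx x)) /\
                        (forall x y, D M x -> D M y -> hx x = hx y -> x = y)).
    { intros [hx [H1 H2]]. destruct (M'_new M VM hx H1) as [N1 N2].
      apply N2. apply (l_D (HM _ (M'_valid M VM hx H1 H2) (M'_ge M hx H1 H2))); auto. }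
    destruct (inj_total {x | D M x} {x | ~ D M x}) as [[f Hf]|[g Hg]].
    + exfalso. apply NoExt.
      exists (fun x => match xmi (D M x) with left H => proj1_sig (f (exist _ x H)) | right _ => x end).
      split.
      * intros x Hx. destruct (xmi _) as [H|H]; [apply (proj2_sig (f _))|contradiction].
      * intros x y Hx Hy. destruct (xmi (D M x)) as [H|H]; [|contradiction].
        destruct (xmi (D M y)) as [H'|H']; [|contradiction].
        intros E. apply sig_eq in E. apply Hf in E. apply (f_equal (@proj1_sig _ _)) in E. exact E.
    + set (j := fun x => match xmi (D M x) with
                  | left H => exist (D M) (db M false x) (v_db VM false x H)
                  | right H => exist (D M) (db M true (proj1_sig (g (exist _ x H))))
                                 (v_db VM true _ (proj2_sig (g (exist _ x H)))) end).
      assert (Hj : inj j).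
      { intros x y. unfold j. destruct (xmi (D M x)) as [H|H]; destruct (xmi (D M y)) as [H'|H'];
          intros E; apply (f_equal (@proj1_sig _ _)) in E; simpl in E;
          apply (v_dbi VM) in E; try apply (proj2_sig (g _)); auto; destruct E as [E1 E2];
          try discriminate; try assumption.
        apply sig_eq in E2. apply Hg in E2. apply (f_equal (@proj1_sig _ _)) in E2. exact E2. }
      destruct (CB {x | D M x} X (@proj1_sig _ _) j) as [h Hh].
      * intros a b; apply sig_eq.
      * exact Hj.
      * exists (Ugrp M VM). split; [apply Ugrp_abelian|]. exists h; exact Hh.
Qed.
End Inf.
From Stdlib Require Import ClassicalEpsilon FunctionalExtensionality PropExtensionality ProofIrrelevance Classical Lia PeanoNat List.
Set Bullet Behavior "Strict Subproofs".

Definition Zk (k : nat) (Hk : 0 < k) : group.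
Proof.
  assert (Hk' : k <> 0) by lia.
  refine (Group {i | i < k}
    (fun a b => exist _ ((proj1_sig a + proj1_sig b) mod k) (Nat.mod_upper_bound _ _ Hk'))
    (exist _ 0 Hk)
    (fun a => exist _ ((k - proj1_sig a) mod k) (Nat.mod_upper_bound _ _ Hk')) _ _ _ _ _).
  - intros [a Ha] [b Hb] [c Hc]; apply sig_eq; simpl.
    rewrite Nat.Div0.add_mod_idemp_r, Nat.Div0.add_mod_idemp_l, Nat.add_assoc; auto.
  - intros [a Ha]; apply sig_eq; simpl. apply Nat.mod_small; auto.
  - intros [a Ha]; apply sig_eq; simpl. rewrite Nat.add_0_r. apply Nat.mod_small; auto.
  - intros [a Ha]; apply sig_eq; simpl. rewrite Nat.Div0.add_mod_idemp_l.
    replace (k - a + a) with k by lia. apply Nat.Div0.mod_same.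
  - intros [a Ha]; apply sig_eq; simpl. rewrite Nat.Div0.add_mod_idemp_r.
    replace (a + (k - a)) with k by lia. apply Nat.Div0.mod_same.
Defined.

Lemma Zk_abelian k Hk : abelian (Zk k Hk).
Proof. intros [a Ha] [b Hb]; apply sig_eq; simpl; rewrite Nat.add_comm; auto. Qed.

Section Fin.
Variable X : Type.
Variable x0 : X.

Fixpoint LL (n : nat) : list X :=
  match n with
  | 0 => nil
  | S n => match xmi (exists x, ~ In x (LL n)) with
           | left H => proj1_sig (constructive_indefinite_description _ H) :: LL n
           | right _ => LL n end
  end.

Lemma LL_nodup n : NoDup (LL n).
Proof.
  induction n; simpl. - constructor.
  - destruct (xmi _) as [H|H]; auto.
    destruct (constructive_indefinite_description _ H) as [x Hx]; simpl. constructor; auto.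
Qed.

Lemma LL_mono n m : n <= m -> forall x, In x (LL n) -> In x (LL m).
Proof.
  induction 1; auto. intros x Hx. simpl. destruct (xmi _); [right|]; auto.
Qed.

Lemma finite_or_inf : (exists iota : nat -> X, inj iota) \/
  (exists l : list X, NoDup l /\ forall x, In x l).
Proof.
  destruct (classic (exists n, forall x, In x (LL n))) as [[n Hn]|H].
  - right. exists (LL n); split; auto. apply LL_nodup.
  - left. assert (Hf : forall n, exists x, ~ In x (LL n)).
    { intros n. apply NNPP. intro H'. apply H. exists n. intros x. apply NNPP. intro Hx. apply H'. eauto. }
    exists (fun n => hd x0 (LL (S n))).
    assert (Hs : forall n, In (hd x0 (LL (S n))) (LL (S n)) /\ ~ In (hd x0 (LL (S n))) (LL n)).
    { intros n. simpl. destruct (xmi _) as [H1|H1]; [|exfalso; auto].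
      destruct (constructive_indefinite_description _ H1) as [x Hx]; simpl. split; auto. }
    intros a b E.
    destruct (Nat.lt_trichotomy a b) as [Hab|[Hab|Hab]]; auto; exfalso.
    + apply (proj2 (Hs b)). rewrite <- E. apply (LL_mono (S a)); [lia | apply Hs].
    + apply (proj2 (Hs a)). rewrite E. apply (LL_mono (S b)); [lia | apply Hs].
Qed.

Lemma group_fin (l : list X) : NoDup l -> (forall x, In x l) ->
  exists A : group, abelian A /\ exists f : A -> X, bij f.
Proof.
  intros Hn Hc. assert (Hk : 0 < length l).
  { destruct l; simpl; [destruct (Hc x0)|]; lia. }
  exists (Zk _ Hk). split; [apply Zk_abelian|].
  exists (fun a => nth (proj1_sig a) l x0). split.
  - intros [a Ha] [b Hb] E; simpl in E. apply sig_eq; simpl.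
    apply (proj1 (NoDup_nth l x0) Hn); auto.
  - intros y. destruct (In_nth l y x0 (Hc y)) as [i [Hi E]].
    exists (exist _ i Hi); simpl; auto.
Qed.
End Fin.

Lemma group_struct (X : Type) : inhabited X ->
  exists A : group, abelian A /\ exists f : A -> X, bij f.
Proof.
  intros [x0]. destruct (finite_or_inf X x0) as [[iota Hi]|[l [Hn Hc]]].
  - apply (group_inf X iota Hi).
  - apply (group_fin X x0 l Hn Hc).
Qed.
From Stdlib Require Import ClassicalEpsilon FunctionalExtensionality PropExtensionality ProofIrrelevance Classical Lia PeanoNat ZArith Relations.
Set Bullet Behavior "Strict Subproofs".

Definition cid := constructive_indefinite_description.

Lemma bij_inv (A B : Type) (f : A -> B) : bijective f ->
  exists g : B -> A, bijective g /\ (forall x, g (f x) = x) /\ (forall y, f (g y) = y).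
Proof.
  intros [Hi Hs].
  exists (fun y => proj1_sig (cid _ _ (Hs y))).
  assert (H1 : forall y, f (proj1_sig (cid _ _ (Hs y))) = y).
  { intros y; destruct (cid _ _ (Hs y)); auto. }
  assert (H2 : forall x, proj1_sig (cid _ _ (Hs (f x))) = x).
  { intros x; apply Hi; rewrite H1; auto. }
  repeat split; auto.
  - intros x y E. rewrite <- (H1 x), <- (H1 y), E; auto.
  - intros x. exists (f x); auto.
Qed.

Lemma bij_comp (A B C : Type) (f : A -> B) (g : B -> C) : bijective f -> bijective g ->
  bijective (fun x => g (f x)).
Proof.
  intros [Hi Hs] [Hi' Hs']; split.
  - intros x y E; apply Hi, Hi', E.
  - intros z. destruct (Hs' z) as [y <-]. destruct (Hs y) as [x <-]. eauto.
Qed.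

Lemma iso_sym M N : iso M N -> iso N M.
Proof.
  intros [f [g [Hf [Hg Hinc]]]].
  destruct (bij_inv _ _ f Hf) as [f' [Hf' [E1 E2]]].
  destruct (bij_inv _ _ g Hg) as [g' [Hg' [F1 F2]]].
  exists f', g'. split; [auto|split; [auto|]]. intros e v; split; intros H.
  - apply Hinc. rewrite E2, F2; auto.
  - apply Hinc in H. rewrite E2, F2 in H; auto.
Qed.

Lemma iso_trans M N P : iso M N -> iso N P -> iso M P.
Proof.
  intros [f [g [Hf [Hg Hinc]]]] [f' [g' [Hf' [Hg' Hinc']]]].
  exists (fun x => f' (f x)), (fun x => g' (g x)).
  split; [apply bij_comp; auto|split; [apply bij_comp; auto|]]. intros e v; split.
  - intros H. apply Hinc', Hinc, H.
  - intros H. apply Hinc, Hinc', H.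
Qed.

Definition DU (K : Type) (M : multigraph) : multigraph :=
  {| vert := K * vert M; edge := K * edge M;
     inc := fun e v => fst e = fst v /\ inc M (snd e) (snd v) |}.

Lemma bij_prod (A A' B B' : Type) (f : A -> A') (g : B -> B') : bijective f -> bijective g ->
  bijective (fun p : A * B => (f (fst p), g (snd p))).
Proof.
  intros [Hi Hs] [Hi' Hs']; split.
  - intros [a b] [c d] E; simpl in E. injection E; intros; f_equal; auto.
  - intros [a' b']. destruct (Hs a') as [a <-]. destruct (Hs' b') as [b <-]. exists (a, b); auto.
Qed.

Lemma iso_DU (K K' : Type) (M N : multigraph) (beta : K -> K') :
  bijective beta -> iso M N -> iso (DU K M) (DU K' N).
Proof.
  intros Hb [f [g [Hf [Hg Hinc]]]].
  exists (fun p => (beta (fst p), f (snd p))), (fun p => (beta (fst p), g (snd p))).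
  split; [apply bij_prod; auto|split; [apply bij_prod; auto|]].
  intros e v; simpl; split; intros [H1 H2]; split.
  - congruence.
  - apply Hinc; auto.
  - apply (proj1 Hb); auto.
  - apply Hinc; auto.
Qed.

Definition prodG (G A : group) : group.
Proof.
  refine (Group (gcar G * gcar A)
    (fun p q => (gmul G (fst p) (fst q), gmul A (snd p) (snd q)))
    (gone G, gone A)
    (fun p => (ginv G (fst p), ginv A (snd p))) _ _ _ _ _);
  intros; simpl; f_equal; auto using gmulA, gmul1g, gmulg1, gmulVg, gmulgV;
  try (rewrite gmulA; auto); try apply gmulA.
  all: try (destruct x; simpl; f_equal; auto using gmul1g, gmulg1, gmulVg, gmulgV).
Defined.

Lemma prodG_abelian G A : abelian G -> abelian A -> abelian (prodG G A).
Proof. intros HG HA [a b] [c d]; simpl; f_equal; auto. Qed.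

Lemma ginv_one (A : group) : ginv A (gone A) = gone A.
Proof. rewrite <- (gmulg1 A (ginv A (gone A))). apply gmulVg. Qed.

Lemma gpow_one (A : group) n : gpow A (gone A) n = gone A.
Proof. induction n; simpl; auto. rewrite IHn; apply gmul1g. Qed.

Lemma gpow_prod (G A : group) (x : G) n : gpow (prodG G A) (x, gone A) n = (gpow G x n, gone A).
Proof. induction n; simpl; auto. rewrite IHn; simpl. rewrite gmul1g; auto. Qed.

Lemma zpow_prod (G A : group) (x : G) z : zpow (prodG G A) (x, gone A) z = (zpow G x z, gone A).
Proof.
  destruct z; simpl; auto.
  - apply gpow_prod.
  - rewrite ginv_one. apply gpow_prod.
Qed.

Lemma rcoset_prod (G A : group) (s x : G) (a : A) :
  rcoset (prodG G A) (s, gone A) (x, a) = fun p => rcoset G s x (fst p) /\ snd p = a.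
Proof.
  apply functional_extensionality; intros [g b]; apply propositional_extensionality; simpl.
  unfold rcoset. split.
  - intros [z Hz]. rewrite zpow_prod in Hz. simpl in Hz. injection Hz; intros E1 E2.
    rewrite gmul1g in E1. split; eauto.
  - intros [[z Hz] ->]. exists z. rewrite zpow_prod; simpl. rewrite gmul1g, Hz; auto.
Qed.

Lemma rcoset_self (G : group) (s x : G) : rcoset G s x x.
Proof. exists 0%Z. simpl. rewrite gmul1g; auto. Qed.
From Stdlib Require Import ClassicalEpsilon FunctionalExtensionality PropExtensionality ProofIrrelevance Classical Lia PeanoNat ZArith Relations.
Set Bullet Behavior "Strict Subproofs".

Section PhiDU.
Variables (G A : group) (I : Type) (s : I -> G).
Let GA := prodG G A.
Let s' := fun i => (s i, gone A) : gcar GA.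

Lemma fv_ok (a : A) (v : vert (Phi G I s)) :
  exists x' : GA, (fun q : gcar GA => snd (proj1_sig v) (fst q) /\ snd q = a)
     = rcoset GA (s' (fst (proj1_sig v))) x'.
Proof.
  destruct v as [[i Q] [x Hx]]; simpl in *. exists (x, a). unfold s', GA. rewrite rcoset_prod, Hx; auto.
Qed.

Definition fv (p : A * vert (Phi G I s)) : vert (Phi GA I s') :=
  exist _ (fst (proj1_sig (snd p)), fun q : gcar GA => snd (proj1_sig (snd p)) (fst q) /\ snd q = fst p)
    (fv_ok (fst p) (snd p)).

Definition fe (p : A * edge (Phi G I s)) : edge (Phi GA I s') :=
  exist _ (fst (proj1_sig (snd p)), ((snd (proj1_sig (snd p)), fst p) : gcar GA)) (proj2_sig (snd p)).

Lemma Phi_DU : iso (DU A (Phi G I s)) (Phi GA I s').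
Proof.
  exists fv, fe. split; [|split].
  - split.
    + intros [a [[i Q] [x Hx]]] [a' [[i' Q'] [x' Hx']]] E. unfold fv in E; simpl in E.
      apply (f_equal (@proj1_sig _ _)) in E. simpl in E. injection E; intros E2 E1. subst i'.
      assert (Ea : a = a').
      { assert (H := f_equal (fun P => P (x, a)) E2). simpl in H.
        assert (Qx : Q x) by (simpl in Hx; rewrite Hx; apply rcoset_self).
        assert (HH : Q' x /\ a = a') by (rewrite <- H; auto). destruct HH; auto. }
      subst a'. f_equal. apply sig_eq; simpl. f_equal.
      apply functional_extensionality; intros g.
      assert (H := f_equal (fun P => P (g, a)) E2). simpl in H.
      apply propositional_extensionality. split; intros Hg.
      * assert (HH : Q' g /\ a = a) by (rewrite <- H; auto). tauto.
      * assert (HH : Q g /\ a = a) by (rewrite H; auto). tauto.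
    + intros [[i P] [[x a] Hx]]. simpl in Hx.
      exists (a, exist _ (i, rcoset G (s i) x) (ex_intro _ x eq_refl)).
      apply sig_eq; simpl. f_equal. rewrite Hx. unfold s', GA. rewrite rcoset_prod; auto.
  - split.
    + intros [a e] [a' e'] E. unfold fe in E. apply (f_equal (@proj1_sig _ _)) in E. simpl in E.
      injection E; intros E3 E2 E1. subst a'. f_equal. apply sig_eq.
      destruct (proj1_sig e), (proj1_sig e'); simpl in *; subst; auto.
    + intros [[P [g a]] H]. exists (a, exist _ (P, g) H). apply sig_eq; simpl; auto.
  - intros [a [[P g] He]] [a' [[i Q] Hv]]. simpl. split.
    + intros [E [H1 H2]]. subst; tauto.
    + intros [H1 [H2 H3]]. subst; tauto.
Qed.
End PhiDU.
From Stdlib Require Import ClassicalEpsilon FunctionalExtensionality PropExtensionality ProofIrrelevance Classical Lia PeanoNat ZArith Relations.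
Set Bullet Behavior "Strict Subproofs".

Section Dec.
Variables (Gamma0 Gamma : multigraph).
Hypothesis Hmg : is_multigraph Gamma.
Hypothesis Hc : forall v : vert Gamma, iso (component Gamma v) Gamma0.

Lemma linked_sym u v : linked Gamma u v -> linked Gamma v u.
Proof.
  induction 1.
  - apply rt_step. destruct H as [e [H1 H2]]. exists e; auto.
  - apply rt_refl.
  - eapply rt_trans; eauto.
Qed.

Lemma linked_trans u v w : linked Gamma u v -> linked Gamma v w -> linked Gamma u w.
Proof. intros; eapply rt_trans; eauto. Qed.

Definition K := {C : vert Gamma -> Prop | exists v, C = linked Gamma v}.
Definition rep (C : K) : vert Gamma := proj1_sig (cid _ _ (proj2_sig C)).
Lemma rep_spec C : proj1_sig C = linked Gamma (rep C).
Proof. unfold rep. destruct (cid _ _ (proj2_sig C)); auto. Qed.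
Definition cls (v : vert Gamma) : K := exist _ (linked Gamma v) (ex_intro _ v eq_refl).

Lemma same_comp (C C' : K) u : linked Gamma (rep C) u -> linked Gamma (rep C') u -> C = C'.
Proof.
  intros H1 H2. apply sig_eq. rewrite !rep_spec.
  apply functional_extensionality; intros x; apply propositional_extensionality; split; intros H.
  - apply (linked_trans _ u); auto. apply (linked_trans _ (rep C)); auto. apply linked_sym; auto.
  - apply (linked_trans _ u); auto. apply (linked_trans _ (rep C')); auto. apply linked_sym; auto.
Qed.

Lemma rep_cls u : linked Gamma (rep (cls u)) u.
Proof.
  assert (H := rep_spec (cls u)). simpl in H. rewrite <- H. apply rt_refl.
Qed.

Definition isoT v := cid _ _ (iso_sym _ _ (Hc v)).
Definition Fv v : vert Gamma0 -> vert (component Gamma v) := proj1_sig (isoT v).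
Definition isoT2 v := cid _ _ (proj2_sig (isoT v)).
Definition Fe v : edge Gamma0 -> edge (component Gamma v) := proj1_sig (isoT2 v).
Lemma F_spec v : bijective (Fv v) /\ bijective (Fe v) /\
  forall e w, inc Gamma0 e w <-> inc (component Gamma v) (Fe v e) (Fv v w).
Proof. exact (proj2_sig (isoT2 v)). Qed.

Definition Psv (p : K * vert Gamma0) : vert Gamma := proj1_sig (Fv (rep (fst p)) (snd p)).
Definition Pse (p : K * edge Gamma0) : edge Gamma := proj1_sig (Fe (rep (fst p)) (snd p)).

Theorem decomp : iso (DU K Gamma0) Gamma.
Proof.
  exists Psv, Pse. split; [|split].
  - split.
    + intros [C w] [C' w'] E. unfold Psv in E; simpl in E.
      assert (CC : C = C').
      { apply (same_comp _ _ (proj1_sig (Fv (rep C) w))).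
        - apply (proj2_sig (Fv (rep C) w)).
        - rewrite E. apply (proj2_sig (Fv (rep C') w')). }
      subst C'. apply sig_eq in E. apply (proj1 (proj1 (F_spec (rep C)))) in E. subst; auto.
    + intros u. destruct (proj2 (proj1 (F_spec (rep (cls u)))) (exist _ u (rep_cls u))) as [w Hw].
      exists (cls u, w). unfold Psv; simpl. rewrite Hw; auto.
  - split.
    + intros [C e] [C' e'] E. unfold Pse in E; simpl in E.
      assert (CC : C = C').
      { destruct (proj2_sig (Fe (rep C) e)) as [w [H1 H2]].
        destruct (proj2_sig (Fe (rep C') e')) as [w' [H1' H2']].
        apply (same_comp _ _ w); auto. apply (linked_trans _ w'); auto.
        apply rt_step. exists (proj1_sig (Fe (rep C') e')). split; auto. rewrite <- E; auto. }
      subst C'. apply sig_eq in E. apply (proj1 (proj1 (proj2 (F_spec (rep C))))) in E. subst; auto.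
    + intros eps. destruct (Hmg eps) as [u [v [Hu _]]].
      destruct (proj2 (proj1 (proj2 (F_spec (rep (cls u)))))
         (exist _ eps (ex_intro _ u (conj (rep_cls u) Hu)))) as [e He].
      exists (cls u, e). unfold Pse; simpl. rewrite He; auto.
  - intros [C e] [C' w]. simpl. split.
    + intros [E H]. subst C'. apply (proj2 (proj2 (F_spec (rep C)))) in H. exact H.
    + intros H. assert (CC : C = C').
      { destruct (proj2_sig (Fe (rep C) e)) as [w0 [H1 H2]].
        apply (same_comp _ _ (proj1_sig (Fv (rep C') w))).
        - apply (linked_trans _ w0); auto. apply rt_step. exists (proj1_sig (Fe (rep C) e)); auto.
        - apply (proj2_sig (Fv (rep C') w)). }
      subst C'. split; auto. apply (proj2 (proj2 (F_spec (rep C)))). exact H.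
Qed.
End Dec.

Lemma empty_iso (Gamma : multigraph) (G : group) :
  is_multigraph Gamma -> ~ inhabited (vert Gamma) ->
  iso (Phi G Empty_set (fun e : Empty_set => match e with end)) Gamma.
Proof.
  intros Hmg Hne.
  assert (NE : edge (Phi G Empty_set (fun e : Empty_set => match e with end)) -> False).
  { intros [p [i _]]; destruct i. }
  assert (NV : vert (Phi G Empty_set (fun e : Empty_set => match e with end)) -> False).
  { intros [[i _] _]; destruct i. }
  exists (fun v => False_rect _ (NV v)), (fun e => False_rect _ (NE e)).
  split; [|split].
  - split; [intros x; destruct (NV x)|intros y; destruct (Hne (inhabits y))].
  - split; [intros x; destruct (NE x)|intros y].
    destruct (Hmg y) as [u _]. destruct (Hne (inhabits u)).
  - intros e; destruct (NE e).
Qed.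

Theorem proposition3 (Gamma0 Gamma : multigraph) :
  is_multigraph Gamma ->
  connected Gamma0 ->
  (forall v : vert Gamma, iso (component Gamma v) Gamma0) ->
  (is_Ggraph Gamma0 -> is_Ggraph Gamma) /\
  (is_abelian_Ggraph Gamma0 -> is_abelian_Ggraph Gamma).
Proof.
  intros Hmg _ Hc.
  destruct (classic (inhabited (vert Gamma))) as [[v0]|Hne].
  - destruct (group_struct (K Gamma) (inhabits (cls Gamma v0))) as [A [HA [beta Hb]]].
    assert (Main : forall G I s, iso (Phi G I s) Gamma0 ->
              iso (Phi (prodG G A) I (fun i => (s i, gone A))) Gamma).
    { intros G I s H. eapply iso_trans; [apply iso_sym, Phi_DU|].
      eapply iso_trans; [apply (iso_DU _ _ _ _ beta Hb H)|]. apply decomp; auto. }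
    split.
    + intros [G [I [s H]]]. exists (prodG G A), I, (fun i => (s i, gone A)). apply Main; auto.
    + intros [G [I [s [HG H]]]]. exists (prodG G A), I, (fun i => (s i, gone A)).
      split; [apply prodG_abelian; auto | apply Main; auto].
  - split.
    + intros [G _]. exists G, Empty_set, (fun e : Empty_set => match e with end). apply empty_iso; auto.
    + intros [G [_ [_ [HG _]]]]. exists G, Empty_set, (fun e : Empty_set => match e with end).
      split; auto. apply empty_iso; auto.
Qed.
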